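(* In qubit quantum theory, let $M=\hat n\cdot\vec\sigma$ and $M'=\hat n'\cdot\vec\sigma$ be the $\pm1$-valued projective measurements along unit Bloch vectors $\hat n,\hat n'\in\mathbb{R}^3$, where $\vec\sigma=(\sigma_x,\sigma_y,\sigma_z)$ are the Pauli matrices. Then every qubit state (density operator) satisfies the $A_1^2$-orbit-realizability condition relative to $M$ and $M'$ if and only if $\hat n\cdot\hat n'=0$.
   Context: For a qubit density operator $\rho$ and a $\pm1$-valued observable $M$, $\langle M\rangle_\rho=\mathrm{tr}(M\rho)$. A state $\rho_1$ satisfies the $A_1^2$-orbit-realizability condition relative to $M,M'$ if there exist qubit density operators $\rho_2,\rho_3,\rho_4$ with $\langle M\rangle_{\rho_1}=\langle M\rangle_{\rho_2}=-\langle M\rangle_{\rho_3}=-\langle M\rangle_{\rho_4}$, $\langle M'\rangle_{\rho_1}=-\langle M'\rangle_{\rho_2}=-\langle M'\rangle_{\rho_3}=\langle M'\rangle_{\rho_4}$, and $\tfrac12\rho_1+\tfrac12\rho_3=\tfrac12\rho_2+\tfrac12\rho_4$. *)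

(* Defs.v *)
From HB Require Import structures.
From mathcomp Require Import all_boot all_order all_algebra.
From mathcomp Require Import complex.
Set Implicit Arguments. Unset Strict Implicit. Unset Printing Implicit Defensive.
Import Order.TTheory GRing.Theory Num.Theory.
Local Open Scope ring_scope.
Local Open Scope complex_scope.

Section Qubit.
Variable R : rcfType.
Local Notation C := R[i].

Definition adj m n (A : 'M[C]_(m, n)) : 'M[C]_(n, m) := (map_mx (@conjc R) A)^T.

Definition sigma_x : 'M[C]_2 :=
  \matrix_(i < 2, j < 2) (if i == j then 0 else 1).
Definition sigma_y : 'M[C]_2 :=
  \matrix_(i < 2, j < 2)
    (if i == j then 0 else if (i == 0 :> nat) then - 'i else 'i).
Definition sigma_z : 'M[C]_2 :=
  \matrix_(i < 2, j < 2)
    (if i == j then (if (i == 0 :> nat) then 1 else -1) else 0).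

Definition dot3 (n m : 'rV[R]_3) : R := \sum_(k < 3) n 0 k * m 0 k.
Definition unit_vec (n : 'rV[R]_3) : Prop := dot3 n n = 1.

Definition pauli_obs (n : 'rV[R]_3) : 'M[C]_2 :=
  (n 0 0)%:C *: sigma_x + (n 0 1)%:C *: sigma_y + (n 0 2%:R)%:C *: sigma_z.

Definition density (rho : 'M[C]_2) : Prop :=
  [/\ adj rho = rho,
      (forall v : 'cV[C]_2, 0 <= ((adj v) *m rho *m v) 0 0)
    & \tr rho = 1].

Definition expect (M rho : 'M[C]_2) : C := \tr (M *m rho).

Definition A12_realizable (M M' rho1 : 'M[C]_2) : Prop :=
  exists rho2 rho3 rho4 : 'M[C]_2,
    density rho2 /\ density rho3 /\ density rho4 /\
    (expect M rho1 = expect M rho2 /\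
     expect M rho2 = - expect M rho3 /\
     - expect M rho3 = - expect M rho4) /\
    (expect M' rho1 = - expect M' rho2 /\
     - expect M' rho2 = - expect M' rho3 /\
     - expect M' rho3 = expect M' rho4) /\
    (1/2%:R) *: rho1 + (1/2%:R) *: rho3 = (1/2%:R) *: rho2 + (1/2%:R) *: rho4.

End Qubit.

(* Main.v *)
Require Import Defs.
From HB Require Import structures.
From mathcomp Require Import all_boot all_order all_algebra.
From mathcomp Require Import complex ring lra.
Import Order.TTheory GRing.Theory Num.Theory.
Local Open Scope ring_scope.

Lemma mul2E (R : rcfType) m p (A : 'M[R[i]]_(m,2)) (B : 'M[R[i]]_(2,p)) i j :
  (A *m B) i j = A i 0 * B 0 j + A i 1 * B 1 j.
Proof. rewrite mxE !big_ord_recl big_ord0 addr0.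
by have -> : (lift ord0 ord0 : 'I_2) = 1 by apply/val_inj. Qed.

Lemma tr2E (R : rcfType) (A : 'M[R[i]]_2) : \tr A = A 0 0 + A 1 1.
Proof. rewrite /mxtrace !big_ord_recl big_ord0 addr0.
by have -> : (lift ord0 ord0 : 'I_2) = 1 by apply/val_inj. Qed.

Lemma quadE (R : rcfType) (rho : 'M[R[i]]_2) (v : 'cV[R[i]]_2) :
  (adj v *m rho *m v) 0 0 = conjc (v 0 0) * (rho 0 0 * v 0 0 + rho 0 1 * v 1 0)
     + conjc (v 1 0) * (rho 1 0 * v 0 0 + rho 1 1 * v 1 0).
Proof. rewrite !mul2E /adj !mxE. ring. Qed.

Lemma dot3E (R : rcfType) (n m : 'rV[R]_3) :
  dot3 n m = n 0 0 * m 0 0 + n 0 1 * m 0 1 + n 0 2%:R * m 0 2%:R.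
Proof.
rewrite /dot3 !big_ord_recl big_ord0 addr0 addrA.
have -> : (lift ord0 ord0 : 'I_3) = 1 by apply/val_inj.
by have -> : (lift ord0 (lift ord0 ord0) : 'I_3) = 2%:R by apply/val_inj.
Qed.
Local Open Scope complex_scope.

Definition bloch (R : rcfType) (x y z : R) : 'M[R[i]]_2 :=
  \matrix_(i < 2, j < 2) if i == j then (if (i == 0 :> nat) then ((1+z)/2%:R)%:C else ((1-z)/2%:R)%:C)
     else if (i == 0 :> nat) then (x/2%:R) +i* (-(y/2%:R)) else (x/2%:R) +i* (y/2%:R).
Arguments bloch {R} x y z.

Lemma expect_bloch (R : rcfType) (n : 'rV[R]_3) (x y z : R) :
  expect (pauli_obs n) (bloch x y z) = (n 0 0 * x + n 0 1 * y + n 0 2%:R * z)%:C.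
Proof.
rewrite /expect tr2E !mul2E /pauli_obs !mxE /=.
apply/eqP; by rewrite eq_complex /=; apply/andP; split; apply/eqP; field.
all: by [].
Qed.

Lemma ge0_eq (R : numDomainType) (a b : R) : a = b -> 0 <= a -> 0 <= b.
Proof. by move->. Qed.

Lemma density_bloch (R : rcfType) (x y z : R) :
  x^+2 + y^+2 + z^+2 <= 1 -> density (bloch x y z).
Proof.
move=> Hn; split.
- apply/matrixP => i j; rewrite /adj !mxE.
  case: i => [[|[|?]] Hi] //; case: j => [[|[|?]] Hj] //=; rewrite ?mxE /=;
  by apply/eqP; rewrite eq_complex /= ?oppr0 ?opprK ?eqxx.
- move=> v; rewrite quadE !mxE /=.
  case: (v 0 0) => [a1 a2]; case: (v 1 0) => [b1 b2].
  rewrite lecE /=; apply/andP; split; first by apply/eqP; field.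
  set p := (1 + z) / 2%:R; set q := (1 - z)/2%:R; set u := x / 2%:R; set w := - (y / 2%:R).
  have Hd : 0 <= p * q - u^+2 - w^+2.
    rewrite /p /q /u /w.
    have -> : (1 + z) / 2%:R * ((1 - z) / 2%:R) - (x / 2%:R) ^+ 2 - (- (y / 2%:R)) ^+ 2
       = (1 - (x^+2 + y^+2 + z^+2)) / 4%:R by field.
    by apply: divr_ge0; rewrite ?subr_ge0 // ler0n.
  have Hab : 0 <= a1^+2 + a2^+2 + b1^+2 + b2^+2.
    by rewrite !addr_ge0 // sqr_ge0.
  have H1 := mulr_ge0 Hd Hab.
  have S1 := sqr_ge0 (p * a1 + u * b1 - w * b2).
  have S2 := sqr_ge0 (p * a2 + u * b2 + w * b1).
  have S3 := sqr_ge0 (q * b1 + u * a1 + w * a2).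
  have S4 := sqr_ge0 (q * b2 + u * a2 - w * a1).
  have Hpq : p + q = 1 by rewrite /p /q; field.
  move: (addr_ge0 (addr_ge0 (addr_ge0 (addr_ge0 S1 S2) S3) S4) H1); apply: ge0_eq.
  by rewrite /p /q /u /w; field.
- rewrite tr2E !mxE /=; apply/eqP; rewrite eq_complex /= addr0 eqxx andbT.
  by apply/eqP; field.
Qed.

Definition col2 {R : rcfType} (a b : R[i]) : 'cV[R[i]]_2 :=
  \col_(i < 2) if (i == 0 :> nat) then a else b.

Lemma density_bloch_inv (R : rcfType) (rho : 'M[R[i]]_2) :
  density rho -> exists x y z : R, x^+2 + y^+2 + z^+2 <= 1 /\ rho = bloch x y z.
Proof.
case=> Hadj Hpsd Htr.
have Ha : forall i j, rho i j = conjc (rho j i).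
  by move=> i j; rewrite -{1}Hadj /adj !mxE.
move E00: (rho 0 0) => [p p']; move E11: (rho 1 1) => [q q'];
move E01: (rho 0 1) => [u w].
have E10 : rho 1 0 = u +i* (- w) by rewrite Ha E01.
have := Ha 0 0; rewrite E00 => -[Hp']; have {Hp'} Hp' : p' = 0 by lra.
have := Ha 1 1; rewrite E11 => -[Hq']; have {Hq'} Hq' : q' = 0 by lra.
subst p' q'.
move: Htr; rewrite tr2E E00 E11 => -[Hpq _].
have Hv := fun a b => Hpsd (col2 a b).
have Hv1 := Hv (1 +i* 0) (0 +i* 0); have Hv2 := Hv (0 +i* 0) (1 +i* 0); have Hv3 := Hv (rho 0 1) (- rho 0 0);
have Hv4 := Hv (- rho 1 1) (rho 1 0).
move: Hv1 Hv2 Hv3 Hv4; rewrite !quadE !mxE /= E00 E11 E01 E10 /= !lecE /=.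
move=> /andP[_ H1] /andP[_ H2] /andP[_ H3] /andP[_ H4].
set D := p * q - u^+2 - w^+2.
have Hd1 : 0 <= p * D by move: H3; apply: ge0_eq; rewrite /D; ring.
have Hd2 : 0 <= q * D by move: H4; apply: ge0_eq; rewrite /D; ring.
have HD : 0 <= D.
  have -> : D = p * D + q * D by rewrite -mulrDl Hpq mul1r.
  by rewrite addr_ge0.
exists (2%:R * u), (- (2%:R * w)), (p - q); split.
  have -> : (2%:R * u) ^+ 2 + (- (2%:R * w)) ^+ 2 + (p - q) ^+ 2 = (p + q)^+2 - 4%:R * D
    by rewrite /D; ring.
  by rewrite Hpq; lra.
apply/matrixP => i j; rewrite !mxE.
case: i => [[|[|?]] Hi] //; case: j => [[|[|?]] Hj] //=.
- have -> : Ordinal Hi = 0 by apply/val_inj.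
  have -> : Ordinal Hj = 0 by apply/val_inj.
  rewrite E00; apply/eqP; rewrite eq_complex /= eqxx andbT; apply/eqP.
  have -> : q = 1 - p by lra.
  by field.
- have -> : Ordinal Hi = 0 by apply/val_inj.
  have -> : Ordinal Hj = 1 by apply/val_inj.
  rewrite E01; apply/eqP; by rewrite eq_complex /=; apply/andP; split; apply/eqP; field.
- have -> : Ordinal Hi = 1 by apply/val_inj.
  have -> : Ordinal Hj = 0 by apply/val_inj.
  rewrite E10; apply/eqP; by rewrite eq_complex /=; apply/andP; split; apply/eqP; field.
- have -> : Ordinal Hi = 1 by apply/val_inj.
  have -> : Ordinal Hj = 1 by apply/val_inj.
  rewrite E11; apply/eqP; rewrite eq_complex /= eqxx andbT; apply/eqP.
  have -> : q = 1 - p by lra.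
  by field.
Qed.

Lemma ring_mod (R : comNzRingType) (k1 k2 k3 e1 e2 e3 P Q : R) :
  e1 = 0 -> e2 = 0 -> e3 = 0 -> P - Q = k1 * e1 + k2 * e2 + k3 * e3 -> P = Q.
Proof. move=> -> -> -> /eqP; rewrite !mulr0 !addr0 subr_eq0; by move/eqP. Qed.

Lemma le_mod (R : realDomainType) (k1 k2 k3 e1 e2 e3 P Q : R) :
  e1 = 0 -> e2 = 0 -> e3 = 0 -> Q <= 1 -> P - Q = k1 * e1 + k2 * e2 + k3 * e3 -> P <= 1.
Proof. by move=> H1 H2 H3 HQ /(@ring_mod _ _ _ _ _ _ _ _ _ H1 H2 H3) ->. Qed.

Lemma ceq (R : rcfType) (P Q : R) : P = Q -> P%:C = Q%:C :> R[i].
Proof. by move->. Qed.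

Theorem mainTheorem3 (R : rcfType) (n n' : 'rV[R]_3) :
  unit_vec n -> unit_vec n' ->
  ((forall rho : 'M[R[i]]_2, density rho ->
      A12_realizable (pauli_obs n) (pauli_obs n') rho)
   <-> dot3 n n' = 0).
Proof.
rewrite /unit_vec !dot3E.
move: (n 0 0) (n 0 1) (n 0 2%:R) (n' 0 0) (n' 0 1) (n' 0 2%:R)
  (@expect_bloch R n) (@expect_bloch R n') => n1 n2 n3 m1 m2 m3 EN EM Hn Hm.
have e1z : n1 * n1 + n2 * n2 + n3 * n3 - 1 = 0 by rewrite Hn subrr.
have e2z : m1 * m1 + m2 * m2 + m3 * m3 - 1 = 0 by rewrite Hm subrr.
split.
- move=> H.
  have D1 : density (bloch n1 n2 n3).
    by apply: density_bloch; rewrite !expr2 Hn.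
  have [r2 [r3 [r4 [D2 [_ [_ [[E1 _] [[F1 _] _]]]]]]]] := H _ D1.
  have [x [y [z [Hr E2]]]] := @density_bloch_inv R _ D2.
  subst r2.
  move: E1 F1; rewrite !EN !EM -rmorphN => /complexI E1 /complexI F1.
  have Hs : (x - n1)^+2 + (y - n2)^+2 + (z - n3)^+2 <= 0.
    have -> : (x - n1)^+2 + (y - n2)^+2 + (z - n3)^+2 =
      (x^+2 + y^+2 + z^+2 - 1) - 2%:R * ((n1 * x + n2 * y + n3 * z) - (n1 * n1 + n2 * n2 + n3 * n3))
      - (n1 * n1 + n2 * n2 + n3 * n3 - 1) by ring.
    by rewrite e1z -E1 subrr mulr0 !subr0 subr_le0.
  have Sx := sqr_ge0 (x - n1); have Sy := sqr_ge0 (y - n2); have Sz := sqr_ge0 (z - n3).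
  have : (x - n1)^+2 = 0 by lra.
  have : (y - n2)^+2 = 0 by lra.
  have : (z - n3)^+2 = 0 by lra.
  move=> /eqP; rewrite sqrf_eq0 subr_eq0 => /eqP Ez.
  move=> /eqP; rewrite sqrf_eq0 subr_eq0 => /eqP Ey.
  move=> /eqP; rewrite sqrf_eq0 subr_eq0 => /eqP Ex.
  subst x y z.
  have -> : n1 * m1 + n2 * m2 + n3 * m3 = m1 * n1 + m2 * n2 + m3 * n3 by ring.
  lra.
- move=> Ho rho Drho.
  have [x [y [z [Hr ->]]]] := @density_bloch_inv R _ Drho.
  pose a := n1 * x + n2 * y + n3 * z.
  pose b := m1 * x + m2 * y + m3 * z.
  exists (bloch (x - 2%:R * b * m1) (y - 2%:R * b * m2) (z - 2%:R * b * m3)).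
  exists (bloch (x - 2%:R * a * n1 - 2%:R * b * m1) (y - 2%:R * a * n2 - 2%:R * b * m2)
                (z - 2%:R * a * n3 - 2%:R * b * m3)).
  exists (bloch (x - 2%:R * a * n1) (y - 2%:R * a * n2) (z - 2%:R * a * n3)).
  rewrite !EN !EM -!rmorphN.
  split.
    apply: density_bloch.
    apply: (@le_mod _ (0) (4%:R * b^+2) (0) _ _ _ _ _ e1z e2z Ho Hr).
    by rewrite /a /b; ring.
  split.
    apply: density_bloch.
    apply: (@le_mod _ (4%:R * a^+2) (4%:R * b^+2) (8%:R * a * b) _ _ _ _ _ e1z e2z Ho Hr).
    by rewrite /a /b; ring.
  split.
    apply: density_bloch.
    apply: (@le_mod _ (4%:R * a^+2) (0) (0) _ _ _ _ _ e1z e2z Ho Hr).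
    by rewrite /a /b; ring.
  split.
    split; [|split]; apply: ceq.
    + by apply: (@ring_mod _ (0) (0) (2%:R * b) _ _ _ _ _ e1z e2z Ho); rewrite /a /b; ring.
    + by apply: (@ring_mod _ (-2%:R * a) (0) (-4%:R * b) _ _ _ _ _ e1z e2z Ho); rewrite /a /b; ring.
    + by apply: (@ring_mod _ (0) (0) (2%:R * b) _ _ _ _ _ e1z e2z Ho); rewrite /a /b; ring.
  split.
    split; [|split]; apply: ceq.
    + by apply: (@ring_mod _ (0) (-2%:R * b) (0) _ _ _ _ _ e1z e2z Ho); rewrite /a /b; ring.
    + by apply: (@ring_mod _ (0) (0) (-2%:R * a) _ _ _ _ _ e1z e2z Ho); rewrite /a /b; ring.
    + by apply: (@ring_mod _ (0) (2%:R * b) (4%:R * a) _ _ _ _ _ e1z e2z Ho); rewrite /a /b; ring.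
  rewrite -!scalerDr; congr (_ *: _).
  apply/matrixP => i j; rewrite !mxE.
  case: i => [[|[|?]] Hi] //; case: j => [[|[|?]] Hj] //=;
  by apply/eqP; rewrite eq_complex /=; apply/andP; split; apply/eqP; rewrite /a /b; field.
Qed.
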